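(* Let $P$ be an $r$-differential poset and $P'$ an $r'$-differential poset, and let $p''_n$ be the number of rank-$n$ elements of the Cartesian product $P\times P'$ (with $p''_k=0$ for $k<0$ and $\Delta p''_n=p''_n-p''_{n-1}$). Then for every $n\ge1$ and $1\le j\le n$ one has $\Delta p''_n\ge \Delta p''_{n-j}$; that is, $\Delta p''_1\le\Delta p''_2\le\cdots$.
   Context: An $r$-differential poset ($r$ a positive integer) is a graded poset with a minimum element, finite intervals and finite rank sets, such that an element covering exactly $m$ elements is covered by exactly $m+r$ elements, and two distinct elements that both cover exactly $m$ common elements are both covered by exactly $m$ common elements. The Cartesian product $P\times P'$ carries the componentwise order and rank function equal to the sum of ranks; it is an $(r+r')$-differential poset. *)

(* Defs.v *)
From mathcomp Require Import all_boot all_order all_algebra.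
Set Implicit Arguments. Unset Strict Implicit. Unset Printing Implicit Defensive.

Definition card_eq (T : eqType) (A : T -> Prop) (k : nat) : Prop :=
  exists s : seq T, uniq s /\ (forall x, A x <-> x \in s) /\ size s = k.

Section Poset.
Variables (T : eqType) (le : T -> T -> Prop).

Definition lt_ (x y : T) : Prop := le x y /\ x <> y.

Definition covby (x y : T) : Prop :=
  lt_ x y /\ ~ (exists z, lt_ x z /\ lt_ z y).

Definition is_partial_order : Prop :=
  [/\ (forall x, le x x),
      (forall x y, le x y -> le y x -> x = y) &
      (forall x y z, le x y -> le y z -> le x z)].

Definition graded_poset (rk : T -> nat) : Prop :=
  [/\ is_partial_order,
      (exists z, (forall x, le z x) /\ rk z = 0%N),
      (forall x y, covby x y -> rk y = (rk x).+1),
      (forall x y, exists k, card_eq (fun z => le x z /\ le z y) k) &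
      (forall n, exists k, card_eq (fun x => rk x = n) k)].

Definition differential_poset (rk : T -> nat) (r : nat) : Prop :=
  [/\ (0 < r)%N,
      graded_poset rk,
      (forall x m, card_eq (fun y => covby y x) m ->
                   card_eq (fun y => covby x y) (m + r)) &
      (forall x y m, x <> y ->
         card_eq (fun z => covby z x /\ covby z y) m ->
         card_eq (fun z => covby x z /\ covby y z) m)].
End Poset.

Definition prod_le (T T' : Type) (le : T -> T -> Prop) (le' : T' -> T' -> Prop)
  (u v : T * T') : Prop := le u.1 v.1 /\ le' u.2 v.2.
Definition prod_rk (T T' : Type) (rk : T -> nat) (rk' : T' -> nat)
  (u : T * T') : nat := (rk u.1 + rk' u.2)%N.

Definition delta (p : nat -> nat) (n : nat) : int :=
  (p n)%:Z - (if n is k.+1 then p k else 0%N)%:Z.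

(* Main.v *)
Require Import Defs.
From mathcomp Require Import all_boot all_order all_algebra.
From Stdlib Require Import ClassicalEpsilon.
Import Order.TTheory GRing.Theory Num.Theory.
Set Implicit Arguments. Unset Strict Implicit. Unset Printing Implicit Defensive.

Lemma card_eq_uniq (T : eqType) (A : T -> Prop) k k' :
  card_eq A k -> card_eq A k' -> k = k'.
Proof.
move=> [s [us [ms <-]]] [s' [us' [ms' <-]]].
apply: perm_size; apply: uniq_perm => // x.
apply/idP/idP => H.
  exact: (ms' x).1 ((ms x).2 H).
exact: (ms x).1 ((ms' x).2 H).
Qed.

Lemma card_eq_count (T : eqType) (A : T -> Prop) (a : pred T) s :
  uniq s -> (forall x, A x -> x \in s) -> (forall x, x \in s -> A x <-> a x) ->
  card_eq A (count a s).
Proof.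
move=> us sA Aa; exists (filter a s); split; first by rewrite filter_uniq.
split; last by rewrite size_filter.
move=> x; rewrite mem_filter; split.
  by move=> Ax; have xs := sA x Ax; rewrite xs andbT; exact: (Aa x xs).1.
by case/andP=> ax xs; exact: (Aa x xs).2.
Qed.

Definition pb (P : Prop) : bool := if excluded_middle_informative P then true else false.
Lemma pbP P : reflect P (pb P).
Proof. rewrite /pb; case: excluded_middle_informative => h; [left|right]; exact h. Qed.

Local Open Scope ring_scope.
Definition conv (f g : nat -> int) n : int := \sum_(k < n.+1) f k * g (n - k)%N.
Definition dl (f : nat -> int) n : int := f n - (if n is k.+1 then f k else 0).

Lemma dl_conv_l f g n : dl (conv f g) n = conv (dl f) g n.
Proof.
rewrite /dl /conv; case: n => [|n]; first by rewrite !big_ord1 !subr0.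
have -> : \sum_(k < n.+2) (f k - (if (k:nat) is k'.+1 then f k' else 0)) * g (n.+1 - k)%N
   = \sum_(k < n.+2) f k * g (n.+1 - k)%N -
     \sum_(k < n.+2) (if (k:nat) is k'.+1 then f k' else 0) * g (n.+1 - k)%N.
  by rewrite -sumrB; apply: eq_bigr => k _; rewrite mulrBl.
congr (_ - _); rewrite [RHS]big_ord_recl /= mul0r add0r; apply: eq_bigr => k _.
by [].
Qed.

Lemma dl_conv_r f g n : dl (conv f g) n = conv f (dl g) n.
Proof.
rewrite /dl /conv; case: n => [|n]; first by rewrite !big_ord1 !subr0.
have -> : \sum_(k < n.+2) f k * (g (n.+1 - k)%N - (if (n.+1 - k)%N is k'.+1 then g k' else 0))
   = \sum_(k < n.+2) f k * g (n.+1 - k)%N -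
     \sum_(k < n.+2) f k * (if (n.+1 - k)%N is k'.+1 then g k' else 0).
  by rewrite -sumrB; apply: eq_bigr => k _; rewrite mulrBr.
congr (_ - _); rewrite [RHS]big_ord_recr /= subnn mulr0 addr0; apply: eq_bigr => k _.
by rewrite /= subSn // -ltnS.
Qed.
Local Open Scope ring_scope.

Lemma sq_exp (m q : nat) (v : 'I_m -> rat) (A : 'I_m -> 'I_q -> rat) :
  \sum_(j < q) (\sum_(i < m) v i * A i j) ^+ 2 =
  \sum_(i < m) \sum_(i' < m) v i * v i' * \sum_(j < q) A i j * A i' j.
Proof.
transitivity (\sum_(j < q) \sum_(i < m) \sum_(i' < m) (v i * A i j) * (v i' * A i' j)).
  apply: eq_bigr => j _; rewrite expr2 mulr_suml; apply: eq_bigr => i _; by rewrite mulr_sumr.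
rewrite exchange_big; apply: eq_bigr => i _; rewrite exchange_big; apply: eq_bigr => i' _.
by rewrite mulr_sumr; apply: eq_bigr => j _; rewrite mulrACA.
Qed.

Lemma count_ord (T : Type) (a : pred T) (s : seq T) x0 :
  count a s = (\sum_(j < size s) a (nth x0 s j))%N.
Proof.
rewrite -sum1_count (big_nth x0) big_mkord big_mkcond /=.
by apply: eq_bigr => i _; case: (a _).
Qed.

Lemma sumb_and (q : nat) (a b : 'I_q -> bool) :
  \sum_(j < q) (a j)%:R * (b j)%:R = ((\sum_(j < q) (a j && b j))%N)%:R :> rat.
Proof. by rewrite natr_sum; apply: eq_bigr => j _; rewrite -natrM mulnb. Qed.

Lemma inj_dim (m q : nat) (M : 'M[rat]_(m, q)) :
  (forall w : 'rV[rat]_m, w *m M = 0 -> w = 0) -> (m <= q)%N.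
Proof.
move=> H.
have K : kermx M = 0.
  apply/row_matrixP => i; rewrite row0; apply: H; exact/sub_kermxP/row_sub.
have := mxrank_ker M; rewrite K mxrank0 => /esym/eqP; rewrite subn_eq0 => h.
exact: leq_trans h (rank_leq_col M).
Qed.
Local Open Scope ring_scope.

Section Mono.
Variables (T : eqType) (le : T -> T -> Prop) (rk : T -> nat) (r : nat).
Hypothesis HP : differential_poset le rk r.

Lemma mono (p : nat -> nat) : (forall n, card_eq (fun x => rk x = n) (p n)) ->
  forall n, (p n <= p n.+1)%N.
Proof.
move=> Hp n.
case: HP => r0 [_ [z0 _] Hcov _ _] Hup Hcom.
have [s [us [ms szs]]] := Hp n.
have [t [ut [mt szt]]] := Hp n.+1.
have [u [uu [mu szu]]] := Hp n.-1.
rewrite -szs -szt.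
pose cv x y := pb (covby le x y).
have upT x y : rk x = n -> covby le x y -> y \in t.
  move=> rx /Hcov ry; apply/(mt y).1; by rewrite ry rx.
have dnU x y : rk x = n -> covby le y x -> y \in u.
  move=> rx /Hcov ry; apply/(mu y).1; by rewrite -rx ry.
have cup x : rk x = n -> count (cv x) t = (count (fun y => cv y x) u + r)%N.
  move=> rx.
  have c1 : card_eq (fun y => covby le y x) (count (fun y => cv y x) u).
    apply: card_eq_count => // y; first exact: dnU.
    by move=> _; split => [h|/pbP //]; exact/pbP.
  have c2 : card_eq (fun y => covby le x y) (count (cv x) t).
    apply: card_eq_count => // y; first exact: upT.
    by move=> _; split => [h|/pbP //]; exact/pbP.
  exact: card_eq_uniq c2 (Hup x _ c1).
have ccom x x' : rk x = n -> rk x' = n -> x <> x' ->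
    count (fun y => cv x y && cv x' y) t = count (fun y => cv y x && cv y x') u.
  move=> rx rx' nx.
  have c1 : card_eq (fun y => covby le y x /\ covby le y x') (count (fun y => cv y x && cv y x') u).
    apply: card_eq_count => // y; first by case=> h _; exact: dnU h.
    move=> _; split; first by case=> h1 h2; apply/andP; split; exact/pbP.
    by case/andP=> /pbP h1 /pbP h2.
  have c2 : card_eq (fun y => covby le x y /\ covby le x' y) (count (fun y => cv x y && cv x' y) t).
    apply: card_eq_count => // y; first by case=> h _; exact: upT h.
    move=> _; split; first by case=> h1 h2; apply/andP; split; exact/pbP.
    by case/andP=> /pbP h1 /pbP h2.
  exact: card_eq_uniq c2 (Hcom x x' _ nx c1).
pose S := size s. pose N := size t. pose Uz := size u.
pose sx (i : 'I_S) := nth z0 s i. pose tx (j : 'I_N) := nth z0 t j.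
pose ux (k : 'I_Uz) := nth z0 u k.
have rsx i : rk (sx i) = n by apply/(ms _).2; rewrite mem_nth.
pose A (i : 'I_S) (j : 'I_N) : rat := (cv (sx i) (tx j))%:R.
pose B (i : 'I_S) (k : 'I_Uz) : rat := (cv (ux k) (sx i))%:R.
have cnt i i' : \sum_(j < N) A i j * A i' j =
    \sum_(k < Uz) B i k * B i' k + (if i == i' then r%:R else 0).
  rewrite /A /B !sumb_and.
  have E1 (a : pred T) w : ((\sum_(j < size w) a (nth z0 w j))%N) = count a w.
    by rewrite (count_ord a w z0).
  rewrite (E1 (fun y => cv (sx i) y && cv (sx i') y) t).
  rewrite (E1 (fun y => cv y (sx i) && cv y (sx i')) u).
  case: eqP => [<-|ne].
    rewrite (eq_count (a2 := cv (sx i))); last by move=> y; rewrite andbb.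
    rewrite (eq_count (a1 := fun y => _ && _) (a2 := fun y => cv y (sx i))); last by move=> y; rewrite andbb.
    by rewrite cup // natrD.
  rewrite addr0 ccom //.
  move=> h; apply: ne; apply: val_inj => /=.
  by apply/eqP; rewrite -(nth_uniq z0 _ _ us) ?ltn_ord //; apply/eqP.
have inj (v : 'I_S -> rat) : (forall j, \sum_i v i * A i j = 0) -> forall i, v i = 0.
  move=> hv.
  have key : \sum_(j < N) (\sum_i v i * A i j) ^+ 2 =
      \sum_(k < Uz) (\sum_i v i * B i k) ^+ 2 + r%:R * \sum_i v i ^+ 2.
    rewrite !sq_exp mulr_sumr -big_split /=; apply: eq_bigr => i _.
    transitivity (\sum_(i' < S) (v i * v i' * \sum_(k < Uz) B i k * B i' k
                   + (if i == i' then r%:R * v i ^+ 2 else 0))).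
      apply: eq_bigr => i' _; rewrite cnt; case: eqP => [<-|_].
        by rewrite mulrDr expr2 [r%:R * _]mulrC.
      by rewrite !addr0.
    rewrite big_split /=; congr (_ + _).
    rewrite (bigD1 i) //= eqxx big1 ?addr0 // => i' H.
    by rewrite eq_sym (negbTE H).
  move: key; rewrite big1; last by move=> j _; rewrite hv expr2 mulr0.
  move/esym/eqP; rewrite paddr_eq0; last first.
  - by rewrite mulr_ge0 // sumr_ge0 // => i _; rewrite sqr_ge0.
  - by rewrite sumr_ge0 // => k _; rewrite sqr_ge0.
  case/andP=> _; rewrite mulf_eq0 pnatr_eq0 -[r == 0%N]negbK -lt0n r0 /= => /eqP h0 i.
  apply/eqP; rewrite -sqrf_eq0; apply/eqP.
  by apply: (psumr_eq0P _ h0) => // i0 _; rewrite sqr_ge0.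
apply: (inj_dim (M := \matrix_(i, j) A i j)) => w hw.
have h0 := inj (fun i => w 0 i) _.
apply/rowP => i; rewrite mxE; apply: h0 => j.
have := congr1 (fun W : 'rV_N => W 0 j) hw; rewrite !mxE; under eq_bigr => k _ do rewrite mxE; by [].
Qed.
End Mono.

Local Close Scope ring_scope.
Lemma prod_count (T T' : eqType) (rk : T -> nat) (rk' : T' -> nat) (p p' q : nat -> nat)
 (Hp : forall n, card_eq (fun x => rk x = n) (p n))
 (Hp' : forall n, card_eq (fun x => rk' x = n) (p' n))
 (Hq : forall n, card_eq (fun u : T * T' => prod_rk rk rk' u = n) (q n)) n :
 q n = (\sum_(k < n.+1) p k * p' (n - k))%N.
Proof.
have [w [uw [mw <-]]] := Hq n.
have part m : count (fun u : T * T' => rk u.1 < m) w =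
    (\sum_(k < m) count (fun u : T * T' => rk u.1 == k) w)%N.
  elim: m => [|m IH].
    by rewrite big_ord0 (eq_count (a2 := pred0)) ?count_pred0 // => u /=; rewrite ltn0.
  rewrite big_ord_recr /= -IH.
  have := count_predUI (fun u : T * T' => rk u.1 < m) (fun u => rk u.1 == m) w.
  rewrite (eq_count (a1 := predI _ _) (a2 := pred0)) ?count_pred0 ?addn0; last first.
    by move=> u /=; case: eqP => [->|]; rewrite ?ltnn ?andbF.
  move=> <-; apply: eq_count => u /=; by rewrite ltnS leq_eqVlt orbC.
have -> : size w = count (fun u : T * T' => rk u.1 < n.+1) w.
  rewrite -count_predT; apply: eq_in_count => u /(mw u).2; rewrite /prod_rk => h.
  by rewrite /= ltnS -h leq_addr.
rewrite part; apply: eq_bigr => k _.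
have kn : (k <= n)%N by rewrite -ltnS.
have [s [us [ms szs]]] := Hp k.
have [s' [us' [ms' szs']]] := Hp' (n - k)%N.
apply: (@card_eq_uniq _ (fun u : T * T' => rk u.1 = k /\ rk' u.2 = (n - k)%N)).
  apply: card_eq_count => // [u [h1 h2]|u uw'].
    by apply/(mw u).1; rewrite /prod_rk h1 h2 subnKC.
  have := (mw u).2 uw'; rewrite /prod_rk => h.
  split => [[-> _] //|/eqP h1]; split => //; apply: (@addnI k); rewrite subnKC // -h1; exact: h.
exists [seq (x, y) | x <- s, y <- s']; split.
  by apply: allpairs_uniq => // [[a b] [c d]] _ _.
split; last by rewrite size_allpairs szs szs'.
move=> u; split => [[h1 h2]|/allpairsP [[x y] [hx hy ->]] /=].
  apply/allpairsP; exists (u.1, u.2); split; first exact: (ms _).1 h1.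
    exact: (ms' _).1 h2.
  by case: u {h1 h2}.
by split; [exact: (ms x).2 hx | exact: (ms' y).2 hy].
Qed.

Theorem proposition4p4
  (T : eqType) (le : T -> T -> Prop) (rk : T -> nat) (r : nat)
  (HP : differential_poset le rk r)
  (T' : eqType) (le' : T' -> T' -> Prop) (rk' : T' -> nat) (r' : nat)
  (HP' : differential_poset le' rk' r')
  (p'' : nat -> nat)
  (Hp : forall n, card_eq (fun u : T * T' => prod_rk rk rk' u = n) (p'' n))
  (n j : nat) (Hn : (1 <= n)%N) (Hj : (1 <= j <= n)%N) :
  (delta p'' (n - j) <= delta p'' n)%R.
Proof.
have [_ [_ _ _ _ Hr] _ _] := HP.
have [_ [_ _ _ _ Hr'] _ _] := HP'.
pose pf k := proj1_sig (constructive_indefinite_description _ (Hr k)).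
have Hpf k : card_eq (fun x => rk x = k) (pf k) :=
  proj2_sig (constructive_indefinite_description _ (Hr k)).
pose pf' k := proj1_sig (constructive_indefinite_description _ (Hr' k)).
have Hpf' k : card_eq (fun x => rk' x = k) (pf' k) :=
  proj2_sig (constructive_indefinite_description _ (Hr' k)).
have m1 := mono HP Hpf.
have m2 := mono HP' Hpf'.
pose P k := Posz (pf k). pose P' k := Posz (pf' k).
have Eq m : Posz (p'' m) = conv P P' m.
  rewrite (prod_count Hpf Hpf' Hp m) /conv -natz natr_sum; apply: eq_bigr => k _.
  by rewrite natrM !natz.
have Ed m : delta p'' m = dl (conv P P') m.
  by rewrite /delta /dl; case: m => [|m]; rewrite !Eq.
have dP k : (0 <= dl P k)%R.
  by case: k => [|k]; rewrite /dl /P ?subr0 // subr_ge0 lez_nat m1.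
have dP' k : (0 <= dl P' k)%R.
  by case: k => [|k]; rewrite /dl /P' ?subr0 // subr_ge0 lez_nat m2.
have st m : (delta p'' m <= delta p'' m.+1)%R.
  rewrite -subr_ge0 !Ed !dl_conv_l.
  have -> : (conv (dl P) P' m.+1 - conv (dl P) P' m = dl (conv (dl P) P') m.+1)%R by [].
  rewrite dl_conv_r /conv sumr_ge0 // => k _; by rewrite mulr_ge0.
have mon a d : (delta p'' a <= delta p'' (a + d))%R.
  elim: d => [|d IH]; first by rewrite addn0.
  by rewrite addnS (le_trans IH (st _)).
case/andP: Hj => _ jn.
by have := mon (n - j)%N j; rewrite subnK.
Qed.
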